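(* Let $\Pi=(P_R,\psi)$ be a 3SS scheme with domain $\mathcal S$, let $P_{\mathbf X}$ be any distribution with support contained in $\mathcal S$, $\mathbf X=(X_1,X_2,X_3)\sim P_{\mathbf X}$, $R\sim P_R$ independent of $\mathbf X$, and $(W_{12},W_{23},W_{31})=\psi(\mathbf X,R)$. Then $$I(W_{12};W_{23}\mid W_{31})\ \ge\ RI(X_1;X_3),\quad I(W_{23};W_{31}\mid W_{12})\ \ge\ RI(X_2;X_1),\quad I(W_{31};W_{12}\mid W_{23})\ \ge\ RI(X_3;X_2).$$
   Context: Setup: $\mathcal X_1,\mathcal X_2,\mathcal X_3$ finite, $\mathcal S\subseteq\mathcal X_1\times\mathcal X_2\times\mathcal X_3$ nonempty. A distribution scheme $(P_R,\psi)$ consists of a distribution $P_R$ on a finite set $\mathcal R$ and a map $\psi:\mathcal S\times\mathcal R\to\mathcal W_{12}\times\mathcal W_{23}\times\mathcal W_{31}$ (finite share alphabets); shares are $(W_{12},W_{23},W_{31})=\psi(\mathbf x,R)$. Party $P_1$ sees $V_1=(W_{12},W_{31})$, $P_2$ sees $V_2=(W_{23},W_{12})$, $P_3$ sees $V_3=(W_{31},W_{23})$. It is a 3SS scheme if (Correctness) for each $i$ there is a function $\phi_i$ with $\Pr[\phi_i(V_i)=x_i]=1$ for every $\mathbf x\in\mathcal S$, and (Perfect privacy) for each $i$ and all $\mathbf x,\mathbf x'\in\mathcal S$ with $x_i=x'_i$, $V_i$ has the same distribution under $\mathbf x$ as under $\mathbf x'$. Residual information: for jointly distributed discrete $A,B$,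 let $A\wedge B$ denote the Gács–Körner common part (the maximal common function: the label of the connected component containing $(A,B)$ in the bipartite graph on $\mathrm{supp}(A)\cup\mathrm{supp}(B)$ with an edge $(a,b)$ iff $P_{AB}(a,b)>0$); then $RI(A;B):=I(A;B)-H(A\wedge B)=I(A;B\mid A\wedge B)$. *)

(* Defs.v *)
From HB Require Import structures.
From mathcomp Require Import all_boot all_order all_algebra.
From mathcomp Require Import reals exp.
Set Implicit Arguments. Unset Strict Implicit. Unset Printing Implicit Defensive.
Import Order.TTheory GRing.Theory Num.Theory.
Local Open Scope ring_scope.

Section InfoTheory.
Variable R : realType.

Definition is_pmf (T : finType) (p : {ffun T -> R}) : Prop :=
  (forall t, 0 <= p t) /\ \sum_(t : T) p t = 1.

Definition dist (O A : finType) (p : {ffun O -> R}) (f : O -> A) (a : A) : R :=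
  \sum_(w : O | f w == a) p w.

Definition xlnx (x : R) : R := if x == 0 then 0 else x * ln x.

Definition entropy (O A : finType) (p : {ffun O -> R}) (f : O -> A) : R :=
  - \sum_(a : A) xlnx (dist p f a).

Definition mutinfo (O A B : finType) (p : {ffun O -> R}) (f : O -> A) (g : O -> B) : R :=
  entropy p f + entropy p g - entropy p (fun w => (f w, g w)).

Definition cmutinfo (O A B C : finType) (p : {ffun O -> R})
    (f : O -> A) (g : O -> B) (h : O -> C) : R :=
  entropy p (fun w => (f w, h w)) + entropy p (fun w => (g w, h w))
  - entropy p (fun w => (f w, g w, h w)) - entropy p h.

(* Gacs-Korner common part: bipartite graph on A + B (the supports; isolated
   vertices are irrelevant), edge {a,b} iff P_{fg}(a,b) > 0; the common part
   of (f,g) is the label (root) of the connected component containing f w. *)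
Definition gk_edge (O A B : finType) (p : {ffun O -> R}) (f : O -> A) (g : O -> B)
    : rel (A + B) :=
  fun u v => match u, v with
             | inl a, inr b => 0 < dist p (fun w => (f w, g w)) (a, b)
             | inr b, inl a => 0 < dist p (fun w => (f w, g w)) (a, b)
             | _, _ => false
             end.

Definition gk_common (O A B : finType) (p : {ffun O -> R}) (f : O -> A) (g : O -> B)
    (w : O) : A + B :=
  fingraph.root (gk_edge p f g) (inl (f w)).

Definition resinfo (O A B : finType) (p : {ffun O -> R}) (f : O -> A) (g : O -> B) : R :=
  mutinfo p f g - entropy p (gk_common p f g).

(* psi is given as a total map; only its values on S matter. *)
Definition share_dist (Rt V : finType) (PR : {ffun Rt -> R})
    (view : Rt -> V) (v : V) : R :=
  \sum_(r : Rt | view r == v) PR r.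

Definition is_3SS (T1 T2 T3 Rt W12 W23 W31 : finType) (S : {set T1 * T2 * T3})
    (PR : {ffun Rt -> R}) (psi : T1 * T2 * T3 -> Rt -> W12 * W23 * W31) : Prop :=
  let w12 x r := (psi x r).1.1 in
  let w23 x r := (psi x r).1.2 in
  let w31 x r := (psi x r).2 in
  let V1 x r := (w12 x r, w31 x r) in
  let V2 x r := (w23 x r, w12 x r) in
  let V3 x r := (w31 x r, w23 x r) in
  [/\ is_pmf PR,
   (* correctness: Pr[phi_i(V_i) = x_i] = 1 for every x in S *)
   (exists phi1 : W12 * W31 -> T1, forall x r, x \in S -> 0 < PR r -> phi1 (V1 x r) = x.1.1),
   (exists phi2 : W23 * W12 -> T2, forall x r, x \in S -> 0 < PR r -> phi2 (V2 x r) = x.1.2),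
   (exists phi3 : W31 * W23 -> T3, forall x r, x \in S -> 0 < PR r -> phi3 (V3 x r) = x.2) &
   [/\ forall x x', x \in S -> x' \in S -> x.1.1 = x'.1.1 ->
         forall v, share_dist PR (V1 x) v = share_dist PR (V1 x') v,
       forall x x', x \in S -> x' \in S -> x.1.2 = x'.1.2 ->
         forall v, share_dist PR (V2 x) v = share_dist PR (V2 x') v &
       forall x x', x \in S -> x' \in S -> x.2 = x'.2 ->
         forall v, share_dist PR (V3 x) v = share_dist PR (V3 x') v]].

Definition joint (T Rt : finType) (PX : {ffun T -> R}) (PR : {ffun Rt -> R})
    : {ffun T * Rt -> R} :=
  [ffun w => PX w.1 * PR w.2].

End InfoTheory.

(* Main.v *)
Require Import Defs.
From HB Require Import structures.
From mathcomp Require Import all_boot all_order all_algebra.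
From mathcomp Require Import reals exp.
From mathcomp.algebra_tactics Require Import ring lra.
Import Order.TTheory GRing.Theory Num.Theory.
Local Open Scope ring_scope.
Set Implicit Arguments. Unset Strict Implicit. Unset Printing Implicit Defensive.

Section Basic.
Variable R : realType.
Variable O : finType.
Variable p : {ffun O -> R}.
Hypothesis p0 : forall w, 0 <= p w.

Lemma xlnxE (x : R) : xlnx x = x * ln x.
Proof. by rewrite /xlnx; case: eqP => [->|]; rewrite ?mul0r. Qed.

Lemma dist_ge0 (A : finType) (f : O -> A) a : 0 <= dist p f a.
Proof. by apply: sumr_ge0 => w _. Qed.

Lemma dist_eq (A B : finType) (f : O -> A) (g : O -> B) a b :
  (forall w, (f w == a) = (g w == b)) -> dist p f a = dist p g b.
Proof. by move=> H; apply: eq_bigl => w; rewrite H. Qed.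

Lemma dist_le (A B : finType) (f : O -> A) (g : O -> B) a b :
  (forall w, f w == a -> g w == b) -> dist p f a <= dist p g b.
Proof.
move=> H; rewrite /dist [X in _ <= X]big_mkcond [X in X <= _]big_mkcond /=.
apply: ler_sum => w _; case: ifP => [/H -> //|_]; by case: ifP.
Qed.

Lemma dist0 (A : finType) (f : O -> A) a : (forall w, f w != a) -> dist p f a = 0.
Proof. by move=> H; rewrite /dist big_pred0 // => w; apply/negbTE. Qed.

Lemma dist_marg (A B : finType) (f : O -> A) (g : O -> B) a :
  dist p f a = \sum_b dist p (fun w => (f w, g w)) (a, b).
Proof.
by rewrite /dist (partition_big g predT) //=.
Qed.

Lemma dist_comp (A B : finType) (f : O -> A) (g : A -> B) b :
  dist p (fun w => g (f w)) b = \sum_(a | g a == b) dist p f a.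
Proof.
rewrite /dist (partition_big f (fun a => g a == b)) /=; last by move=> w.
apply: eq_bigr => a /eqP gab; apply: eq_bigl => w.
by case: (eqVneq (f w) a) => [->|]; rewrite ?gab ?eqxx ?andbF.
Qed.

Lemma ent_omega (A : finType) (f : O -> A) :
  entropy p f = - \sum_w p w * ln (dist p f (f w)).
Proof.
congr (- _); rewrite (partition_big f predT) //=; apply: eq_bigr => a _.
rewrite xlnxE /dist big_distrl /=; apply: eq_bigr => w /eqP ->; done.
Qed.

Lemma dist_pos (A : finType) (f : O -> A) w : p w != 0 -> 0 < dist p f (f w).
Proof.
move=> pw; apply: (@lt_le_trans _ _ (p w)); first by rewrite lt0r pw p0.
rewrite /dist (bigD1 w) //= lerDl; by apply: sumr_ge0.
Qed.

Lemma Heq (A B : finType) (f : O -> A) (g : O -> B) (phi : B -> A) (psi : A -> B) :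
  (forall w, p w != 0 -> f w = phi (g w)) -> (forall w, p w != 0 -> g w = psi (f w)) ->
  entropy p f = entropy p g.
Proof.
move=> Hf Hg; rewrite !ent_omega; congr (- _); apply: eq_bigr => w _.
have [->|pw] := eqVneq (p w) 0; first by rewrite !mul0r.
congr (_ * ln _); rewrite /dist [LHS]big_mkcond [RHS]big_mkcond /=.
apply: eq_bigr => v _.
have [->|pv] := eqVneq (p v) 0; first by rewrite !if_same.
have -> // : (f v == f w) = (g v == g w).
apply/eqP/eqP => e.
  by rewrite (Hg v pv) (Hg w pw) e.
by rewrite (Hf v pv) (Hf w pw) e.
Qed.


Definition D (A : finType) (k : O -> A) w := dist p k (k w).

Section CMI.
Variables (A B C : finType) (f : O -> A) (g : O -> B) (h : O -> C).
Let fh := fun w => (f w, h w).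
Let gh := fun w => (g w, h w).
Let fgh := fun w => (f w, g w, h w).

Lemma cmi_omega : cmutinfo p f g h =
  \sum_w p w * (ln (D fgh w) + ln (D h w) - ln (D fh w) - ln (D gh w)).
Proof.
rewrite /cmutinfo !ent_omega.
rewrite [RHS](eq_bigr (fun w => p w * ln (D fgh w) + p w * ln (D h w) - p w * ln (D fh w)
   - p w * ln (D gh w))); last by move=> w _; ring.
rewrite !sumrB big_split /=; rewrite /D /fh /gh /fgh; ring.
Qed.

Lemma cmi_zero :
  (forall a b c, dist p fgh (a, b, c) * dist p h c = dist p fh (a, c) * dist p gh (b, c)) ->
  cmutinfo p f g h = 0.
Proof.
move=> Hf; rewrite cmi_omega big1 // => w _.
have [->|pw] := eqVneq (p w) 0; first by rewrite mul0r.
have E := congr1 (@ln R) (Hf (f w) (g w) (h w)).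
rewrite !lnM ?posrE ?dist_pos // in E.
rewrite /D; have -> : dist p fgh (fgh w) = dist p fgh (f w, g w, h w) by [].
rewrite E /fh /gh; ring.
Qed.

Lemma sum_pK : \sum_w p w = 1 ->
  \sum_w p w * (D fh w * D gh w / (D fgh w * D h w)) <= 1.
Proof.
move=> p1.
pose I1 u w := (f u, h u) == (f w, h w).
pose I2 v w := (g v, h v) == (g w, h w).
pose T w u v := (if I1 u w && I2 v w then p u * p v else 0) * (p w / (D fgh w * D h w)).
have E1 : forall w, p w * (D fh w * D gh w / (D fgh w * D h w)) = \sum_u \sum_v T w u v.
  move=> w; rewrite [LHS](_ : _ = (D fh w * D gh w) * (p w / (D fgh w * D h w))); last by ring.
  rewrite /D /dist [X in X * _ * _]big_mkcond [X in _ * X * _]big_mkcond /=.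
  rewrite big_distrlr /= mulr_suml; apply: eq_bigr => u _.
  rewrite mulr_suml; apply: eq_bigr => v _; rewrite /T /I1 /I2 /fh /gh.
  case: ifP => _; case: ifP => _ /=. all: try ring.
rewrite (eq_bigr _ (fun w _ => E1 w)) exchange_big /=.
under eq_bigr do rewrite exchange_big /=.
pose Bd u v := if h v == h u then p u * p v / D h u else 0.
apply: (@le_trans _ _ (\sum_u \sum_v Bd u v)).
  apply: ler_sum => u _; apply: ler_sum => v _; rewrite /Bd.
  case: eqP => [hvu|hvu].
    pose t := (f u, g v, h u).
    have Ew : forall w, I1 u w && I2 v w = (fgh w == t).
      move=> w; rewrite /I1 /I2 /fgh /t !xpair_eqE hvu.
      by rewrite [_ == f w]eq_sym [_ == g w]eq_sym [_ == h w]eq_sym; case: (f w == f u); case: (g w == g v); case: (h w == h u).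
    rewrite (eq_bigr (fun w => if fgh w == t then p u * p v / (dist p fgh t * D h u) * p w else 0)); last first.
      move=> w _; rewrite /T Ew; case: eqP => [e|]; last by rewrite mul0r.
      have ehw : h w = h u by move: e; rewrite /fgh /t => -[].
      by rewrite /D e ehw; ring.
    rewrite -big_mkcondr /= -mulr_sumr.
    change (\sum_(i | fgh i == t) p i) with (dist p fgh t).
    have [->|Dt] := eqVneq (dist p fgh t) 0.
      rewrite mulr0 divr_ge0 ?mulr_ge0 //.
      by rewrite /D; apply: dist_ge0.
    have -> : forall a b c : R, c != 0 -> a / (c * b) * c = a / b.
      by move=> a b c c0; rewrite invfM [c^-1 * _]mulrC mulrA -mulrA mulVf // mulr1.
    by []. by [].
  rewrite big1 // => w _; rewrite /T /I1 /I2 !xpair_eqE.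
  case: (eqVneq (h u) (h w)) => e1; rewrite ?andbF /= ?mul0r //.
  case: (eqVneq (h v) (h w)) => e2; rewrite ?andbF /= ?mul0r //.
  by exfalso; apply: hvu; rewrite e2 e1.
rewrite -p1; apply: ler_sum => u _.
rewrite /Bd (eq_bigr (fun v => p u / D h u * (if h v == h u then p v else 0))); last first.
  by move=> v _; case: ifP => _; [rewrite mulrAC | rewrite mulr0].
rewrite -mulr_sumr -big_mkcond /=.
change (\sum_(i | h i == h u) p i) with (D h u).
have [->|Dh] := eqVneq (D h u) 0; first by rewrite mulr0.
by rewrite divfK.
Qed.

Lemma cmi_ge0 : \sum_w p w = 1 -> 0 <= cmutinfo p f g h.
Proof.
move=> p1; rewrite cmi_omega.
pose K w := D fh w * D gh w / (D fgh w * D h w).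
apply: (@le_trans _ _ (\sum_w (p w - p w * K w))).
  by rewrite sumrB p1 subr_ge0 sum_pK.
apply: ler_sum => w _.
have [->|pw] := eqVneq (p w) 0; first by rewrite !mul0r subrr.
have P1 := dist_pos fh pw; have P2 := dist_pos gh pw.
have P3 := dist_pos fgh pw; have P4 := dist_pos h pw.
have Kp : 0 < K w by rewrite /K /D divr_gt0 ?mulr_gt0.
have lnK : ln (K w) = ln (D fh w) + ln (D gh w) - ln (D fgh w) - ln (D h w).
  rewrite /K ln_div ?posrE ?mulr_gt0 // !lnM ?posrE //; ring.
have leK : ln (K w) <= K w - 1.
  have h1 : -1 < K w - 1 by lra.
  by have := le_ln1Dx h1; rewrite addrC subrK.
have pw0 := p0 w.
nra.
Qed.

End CMI.

Section DM.
Variables (TC TX TY : finType) (fC : O -> TC) (fX : O -> TX) (fY : O -> TY).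
Hypothesis M1 : forall c y x, dist p (fun w => (fC w, fY w, fX w)) (c, y, x) * dist p fX x =
  dist p (fun w => (fC w, fX w)) (c, x) * dist p (fun w => (fY w, fX w)) (y, x).
Hypothesis M2 : forall c x y, dist p (fun w => (fC w, fX w, fY w)) (c, x, y) * dist p fY y =
  dist p (fun w => (fC w, fY w)) (c, y) * dist p (fun w => (fX w, fY w)) (x, y).

Let e := gk_edge p fX fY.
Let Q := gk_common p fX fY.
Let cond (u : TX + TY) (c : TC) : R := match u with
  | inl x => dist p (fun w => (fC w, fX w)) (c, x) / dist p fX x
  | inr y => dist p (fun w => (fC w, fY w)) (c, y) / dist p fY y end.

Let dxy_swap x y : dist p (fun w => (fY w, fX w)) (y, x) = dist p (fun w => (fX w, fY w)) (x, y).
Proof. by apply: dist_eq => w; rewrite !xpair_eqE andbC. Qed.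

Let dcxy_swap c x y : dist p (fun w => (fC w, fY w, fX w)) (c, y, x) =
  dist p (fun w => (fC w, fX w, fY w)) (c, x, y).
Proof. by apply: dist_eq => w; rewrite !xpair_eqE -!andbA [(fY w == y) && _]andbC. Qed.

Let Kx c x y : 0 < dist p (fun w => (fX w, fY w)) (x, y) ->
  dist p (fun w => (fC w, fX w, fY w)) (c, x, y) = cond (inl x) c * dist p (fun w => (fX w, fY w)) (x, y).
Proof.
move=> dpos; have dx : 0 < dist p fX x.
  apply: (lt_le_trans dpos); apply: dist_le => w; rewrite xpair_eqE; by case/andP.
have := M1 c y x; rewrite dcxy_swap dxy_swap /= => E.
apply: (@mulIf _ (dist p fX x)); first by rewrite gt_eqF.
by rewrite E /= mulrAC divfK // gt_eqF.
Qed.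

Let Ky c x y : 0 < dist p (fun w => (fX w, fY w)) (x, y) ->
  dist p (fun w => (fC w, fX w, fY w)) (c, x, y) = cond (inr y) c * dist p (fun w => (fX w, fY w)) (x, y).
Proof.
move=> dpos; have dy : 0 < dist p fY y.
  apply: (lt_le_trans dpos); apply: dist_le => w; rewrite xpair_eqE; by case/andP.
have := M2 c x y => /= E.
apply: (@mulIf _ (dist p fY y)); first by rewrite gt_eqF.
by rewrite E /= mulrAC divfK // gt_eqF.
Qed.

Let edge_cond u v : e u v -> forall c, cond u c = cond v c.
Proof.
case: u => [x|y]; case: v => [x'|y'] //= H c.
  apply: (@mulIf _ (dist p (fun w => (fX w, fY w)) (x, y'))); first by rewrite gt_eqF.
  by rewrite -Kx // -Ky.
apply: (@mulIf _ (dist p (fun w => (fX w, fY w)) (x', y))); first by rewrite gt_eqF.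
by rewrite -Kx // -Ky.
Qed.

Let path_cond s u : path e u s -> forall c, cond (last u s) c = cond u c.
Proof.
elim: s u => [//|v s IH] u /= /andP[euv pv] c.
by rewrite IH // (edge_cond euv).
Qed.

Let root_cond u c : cond (fingraph.root e u) c = cond u c.
Proof.
by have /connectP [s ps ->] := connect_root e u; apply: path_cond.
Qed.

Let Kc c x y : dist p (fun w => (fC w, fX w, fY w)) (c, x, y) =
  cond (fingraph.root e (inl x)) c * dist p (fun w => (fX w, fY w)) (x, y).
Proof.
have [d0|dpos] := eqVneq (dist p (fun w => (fX w, fY w)) (x, y)) 0.
  rewrite d0 mulr0; apply/eqP; rewrite eq_le dist_ge0 andbT -d0.
  by apply: dist_le => w; rewrite !xpair_eqE; case/andP => /andP[_ ->].
by rewrite root_cond Kx // lt0r dpos dist_ge0.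
Qed.

Let L1 c x y q : dist p (fun w => (fC w, (fX w, fY w), Q w)) (c, (x, y), q) =
  if fingraph.root e (inl x) == q then dist p (fun w => (fC w, fX w, fY w)) (c, x, y) else 0.
Proof.
case: eqP => [<-|ne].
  apply: dist_eq => w; rewrite /Q /gk_common !xpair_eqE -/e.
  by case: (eqVneq (fX w) x) => [->|]; rewrite ?eqxx ?andbF ?andbT //= andbF.
apply: dist0 => w; rewrite /Q /gk_common !xpair_eqE -/e.
case: (eqVneq (fX w) x) => [->|_]; first by rewrite (introF eqP ne) !andbF.
by rewrite /= !andbF.
Qed.

Let L2 x y q : dist p (fun w => ((fX w, fY w), Q w)) ((x, y), q) =
  if fingraph.root e (inl x) == q then dist p (fun w => (fX w, fY w)) (x, y) else 0.
Proof.
case: eqP => [<-|ne].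
  apply: dist_eq => w; rewrite /Q /gk_common !xpair_eqE -/e.
  by case: (eqVneq (fX w) x) => [->|]; rewrite ?eqxx ?andbT //=.
apply: dist0 => w; rewrite /Q /gk_common !xpair_eqE -/e.
case: (eqVneq (fX w) x) => [->|_]; first by rewrite (introF eqP ne) !andbF.
by [].
Qed.

Let L3 c q : dist p (fun w => (fC w, Q w)) (c, q) = cond q c * dist p Q q.
Proof.
rewrite (dist_marg _ (fun w => (fX w, fY w))) (dist_marg Q (fun w => (fX w, fY w))).
rewrite mulr_sumr; apply: eq_bigr => -[x y] _.
have -> : dist p (fun w => (fC w, Q w, (fX w, fY w))) (c, q, (x, y)) =
  dist p (fun w => (fC w, (fX w, fY w), Q w)) (c, (x, y), q).
  by apply: dist_eq => w; rewrite !xpair_eqE -!andbA; congr (_ && _); rewrite andbC -!andbA.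
have -> : dist p (fun w => (Q w, (fX w, fY w))) (q, (x, y)) =
  dist p (fun w => ((fX w, fY w), Q w)) ((x, y), q).
  by apply: dist_eq => w; rewrite !xpair_eqE andbC.
rewrite L1 L2; case: eqP => [<-|]; last by rewrite mulr0.
by rewrite Kc.
Qed.

Lemma double_markov c xy q :
  dist p (fun w => (fC w, (fX w, fY w), Q w)) (c, xy, q) * dist p Q q =
  dist p (fun w => (fC w, Q w)) (c, q) * dist p (fun w => ((fX w, fY w), Q w)) (xy, q).
Proof.
case: xy => x y; rewrite L1 L2 L3; case: eqP => [<-|]; last by rewrite !mul0r mulr0.
by rewrite Kc; ring.
Qed.

End DM.

Lemma core (TA TB TC TX TY : finType) (fA : O -> TA) (fB : O -> TB) (fC : O -> TC)
  (fX : O -> TX) (fY : O -> TY) (phiX : TA * TC -> TX) (phiY : TB * TC -> TY) :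
  \sum_w p w = 1 ->
  (forall w, p w != 0 -> fX w = phiX (fA w, fC w)) ->
  (forall w, p w != 0 -> fY w = phiY (fB w, fC w)) ->
  (forall c y x, dist p (fun w => (fC w, fY w, fX w)) (c, y, x) * dist p fX x =
    dist p (fun w => (fC w, fX w)) (c, x) * dist p (fun w => (fY w, fX w)) (y, x)) ->
  (forall c x y, dist p (fun w => (fC w, fX w, fY w)) (c, x, y) * dist p fY y =
    dist p (fun w => (fC w, fY w)) (c, y) * dist p (fun w => (fX w, fY w)) (x, y)) ->
  resinfo p fX fY <= cmutinfo p fA fB fC.
Proof.
move=> p1 hX hY M1 M2.
set Q := gk_common p fX fY.
have F1 := cmi_ge0 fA fB (fun w => (fX w, fC w)) p1.
have F2 := cmi_ge0 fB fX (fun w => (fY w, fC w)) p1.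
have F3 := cmi_zero M1.
have F4 := cmi_zero M2.
have F5 := cmi_zero (double_markov M1 M2).
have F6 := cmi_ge0 Q Q fC p1.
rewrite /cmutinfo /= in F1 F2 F3 F4 F5 F6.
rewrite /resinfo /mutinfo /cmutinfo -/Q.
have E1 : entropy p (fun w => (fA w, (fX w, fC w))) = entropy p (fun w => (fA w, fC w)).
  by apply: (Heq (phi := fun t => (t.1, (phiX t, t.2))) (psi := fun t => (t.1, t.2.2))) => w pw //=; rewrite hX.
have E2 : entropy p (fun w => (fA w, fB w, (fX w, fC w))) = entropy p (fun w => (fA w, fB w, fC w)).
  by apply: (Heq (phi := fun t => (t.1, (phiX (t.1.1, t.2), t.2))) (psi := fun t => (t.1, t.2.2))) => w pw //=; rewrite hX.
have E3 : entropy p (fun w => (fB w, (fY w, fC w))) = entropy p (fun w => (fB w, fC w)).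
  by apply: (Heq (phi := fun t => (t.1, (phiY t, t.2))) (psi := fun t => (t.1, t.2.2))) => w pw //=; rewrite hY.
have E4 : entropy p (fun w => (fB w, fX w, (fY w, fC w))) = entropy p (fun w => (fB w, (fX w, fC w))).
  by apply: (Heq (phi := fun t => (t.1, t.2.1, (phiY (t.1, t.2.2), t.2.2))) (psi := fun t => (t.1.1, (t.1.2, t.2.2)))) => w pw //=; rewrite hY.
have E5 : entropy p (fun w => (fX w, fC w)) = entropy p (fun w => (fC w, fX w)).
  by apply: (Heq (phi := fun t => (t.2, t.1)) (psi := fun t => (t.2, t.1))).
have E6 : entropy p (fun w => (fY w, fC w)) = entropy p (fun w => (fC w, fY w)).
  by apply: (Heq (phi := fun t => (t.2, t.1)) (psi := fun t => (t.2, t.1))).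
have E7 : entropy p (fun w => (fX w, (fY w, fC w))) = entropy p (fun w => (fC w, fY w, fX w)).
  by apply: (Heq (phi := fun t => (t.2, (t.1.2, t.1.1))) (psi := fun t => (t.2.2, t.2.1, t.1))).
have E8 : entropy p (fun w => (fC w, fX w, fY w)) = entropy p (fun w => (fC w, fY w, fX w)).
  by apply: (Heq (phi := fun t => (t.1.1, t.2, t.1.2)) (psi := fun t => (t.1.1, t.2, t.1.2))).
have E9 : entropy p (fun w => (fC w, (fX w, fY w), Q w)) = entropy p (fun w => (fC w, fY w, fX w)).
  by apply: (Heq (phi := fun t => (t.1.1, (t.2, t.1.2), fingraph.root (gk_edge p fX fY) (inl t.2))) (psi := fun t => (t.1.1, t.1.2.2, t.1.2.1))).
have E10 : entropy p (fun w => (fY w, fX w)) = entropy p (fun w => (fX w, fY w)).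
  by apply: (Heq (phi := fun t => (t.2, t.1)) (psi := fun t => (t.2, t.1))).
have E11 : entropy p (fun w => ((fX w, fY w), Q w)) = entropy p (fun w => (fX w, fY w)).
  by apply: (Heq (phi := fun t => (t, fingraph.root (gk_edge p fX fY) (inl t.1))) (psi := fun t => t.1)).
have E12 : entropy p (fun w => (fC w, Q w)) = entropy p (fun w => (Q w, fC w)).
  by apply: (Heq (phi := fun t => (t.2, t.1)) (psi := fun t => (t.2, t.1))).
have E13 : entropy p (fun w => (Q w, Q w, fC w)) = entropy p (fun w => (Q w, fC w)).
  by apply: (Heq (phi := fun t => (t.1, t.1, t.2)) (psi := fun t => (t.1.1, t.2))).
rewrite E1 E2 E5 in F1.
rewrite E3 E4 E7 E6 in F2.
rewrite E10 in F3.
rewrite E8 in F4.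
rewrite E9 E11 E12 in F5.
rewrite E13 in F6.
lra.
Qed.

End Basic.

Section Joint.
Variable R : realType.
Variables (T Rt : finType) (PX : {ffun T -> R}) (PR : {ffun Rt -> R}).
Hypothesis PR1 : \sum_r PR r = 1.

Lemma joint_dist (V : finType) (F : T * Rt -> V) v :
  dist (joint PX PR) F v = \sum_t PX t * dist PR (fun r => F (t, r)) v.
Proof.
rewrite /dist big_mkcond /=.
transitivity (\sum_(w : T * Rt) (if F (w.1, w.2) == v then PX w.1 * PR w.2 else 0)).
  by apply: eq_bigr => -[t r] _; rewrite ffunE.
rewrite -(pair_bigA _ (fun t r => if F (t, r) == v then PX t * PR r else 0)) /=.
symmetry; apply: eq_bigr => t _.
rewrite big_mkcond mulr_sumr; apply: eq_bigr => r _.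
by case: ifP => _; rewrite ?mulr0.
Qed.

Lemma dist_const (V K : finType) (F : Rt -> V) (k : K) a b :
  dist PR (fun r => (F r, k)) (a, b) = if k == b then dist PR F a else 0.
Proof.
case: ifP => kb; first by apply: dist_eq => r; rewrite xpair_eqE kb andbT.
by rewrite /dist big_pred0 // => r; rewrite xpair_eqE kb andbF.
Qed.

Lemma dist_const0 (K : finType) (k : K) b :
  dist PR (fun r => k) b = if k == b then 1 else 0.
Proof.
case: ifP => kb; first by rewrite /dist -PR1; apply: eq_bigl => r; rewrite kb.
by rewrite /dist big_pred0 // => r; rewrite kb.
Qed.

Lemma markov_joint (K Yt Ct : finType) (kx : T -> K) (ky : T -> Yt) (s : T -> Rt -> Ct) :
  (forall t t', PX t != 0 -> PX t' != 0 -> kx t = kx t' ->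
     forall c, dist PR (s t) c = dist PR (s t') c) ->
  forall c y x,
  dist (joint PX PR) (fun w => (s w.1 w.2, ky w.1, kx w.1)) (c, y, x) *
    dist (joint PX PR) (fun w => kx w.1) x =
  dist (joint PX PR) (fun w => (s w.1 w.2, kx w.1)) (c, x) *
    dist (joint PX PR) (fun w => (ky w.1, kx w.1)) (y, x).
Proof.
move=> Hs c y x; rewrite !joint_dist /=.
under eq_bigr do rewrite dist_const dist_const.
under [X in _ * X]eq_bigr do rewrite dist_const0.
under [X in _ = X * _]eq_bigr do rewrite dist_const.
under [X in _ = _ * X]eq_bigr do rewrite dist_const dist_const0.
have [t0 /andP[kt0 pt0]|none] := pickP (fun t => (kx t == x) && (PX t != 0)).
  have hs : forall t, PX t != 0 -> kx t == x -> dist PR (s t) c = dist PR (s t0) c.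
    by move=> t pt /eqP kt; apply: Hs => //; rewrite kt (eqP kt0).
  have -> : \sum_t PX t * (if kx t == x then if ky t == y then dist PR (s t) c else 0 else 0)
    = dist PR (s t0) c * \sum_t PX t * (if kx t == x then if ky t == y then 1 else 0 else 0).
    rewrite mulr_sumr; apply: eq_bigr => t _.
    have [->|pt] := eqVneq (PX t) 0; first by rewrite !mul0r mulr0.
    case: ifP => kt; last by rewrite !mulr0.
    by case: ifP => _; rewrite ?mulr0 // mulr1 (hs t pt kt) mulrC.
  have -> : \sum_t PX t * (if kx t == x then dist PR (s t) c else 0)
    = dist PR (s t0) c * \sum_t PX t * (if kx t == x then 1 else 0).
    rewrite mulr_sumr; apply: eq_bigr => t _.
    have [->|pt] := eqVneq (PX t) 0; first by rewrite !mul0r mulr0.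
    case: ifP => kt; last by rewrite !mulr0.
    by rewrite mulr1 (hs t pt kt) mulrC.
  ring.
have z : forall (G : T -> R), \sum_t PX t * (if kx t == x then G t else 0) = 0.
  move=> G; apply: big1 => t _; case: ifP => kt; last by rewrite mulr0.
  by have := none t; rewrite /= kt /= => /negbFE/eqP ->; rewrite mul0r.
by rewrite !z !mul0r.
Qed.

Lemma share_priv (V Ct K : finType) (kx : T -> K) (view : T -> Rt -> V) (g : V -> Ct) :
  (forall t t', PX t != 0 -> PX t' != 0 -> kx t = kx t' ->
     forall v, share_dist PR (view t) v = share_dist PR (view t') v) ->
  forall t t', PX t != 0 -> PX t' != 0 -> kx t = kx t' ->
     forall c, dist PR (fun r => g (view t r)) c = dist PR (fun r => g (view t' r)) c.
Proof.
move=> H t t' pt pt' k c; rewrite !dist_comp; apply: eq_bigr => v _.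
exact: (H t t' pt pt' k v).
Qed.

End Joint.

Unset Implicit Arguments. Set Strict Implicit. Set Printing Implicit Defensive.

Theorem mainTheorem4 (R : realType) (T1 T2 T3 : finType) (S : {set T1 * T2 * T3})
  (HS : S != set0) (Rt W12 W23 W31 : finType) (PR : {ffun Rt -> R})
  (psi : T1 * T2 * T3 -> Rt -> W12 * W23 * W31)
  (H3SS : is_3SS S PR psi)
  (PX : {ffun T1 * T2 * T3 -> R}) (HPX : is_pmf PX)
  (Hsupp : forall x, PX x != 0 -> x \in S) :
  let P := joint PX PR in
  let X1 := fun w : T1 * T2 * T3 * Rt => w.1.1.1 in
  let X2 := fun w : T1 * T2 * T3 * Rt => w.1.1.2 in
  let X3 := fun w : T1 * T2 * T3 * Rt => w.1.2 in
  let w12 := fun w : T1 * T2 * T3 * Rt => (psi w.1 w.2).1.1 in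
  let w23 := fun w : T1 * T2 * T3 * Rt => (psi w.1 w.2).1.2 in
  let w31 := fun w : T1 * T2 * T3 * Rt => (psi w.1 w.2).2 in
  [/\ resinfo P X1 X3 <= cmutinfo P w12 w23 w31,
      resinfo P X2 X1 <= cmutinfo P w23 w31 w12 &
      resinfo P X3 X2 <= cmutinfo P w31 w12 w23].
Proof.
move=> P X1 X2 X3 w12 w23 w31.
move: H3SS; rewrite /is_3SS /= => -[[PR0 PR1] [phi1 Hphi1] [phi2 Hphi2] [phi3 Hphi3] [Pv1 Pv2 Pv3]].
case: HPX => PX0 PX1.
have pP0 : forall w, 0 <= P w by move=> w; rewrite ffunE mulr_ge0.
have pP1 : \sum_w P w = 1.
  transitivity (\sum_(w : T1 * T2 * T3 * Rt) PX w.1 * PR w.2).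
    by apply: eq_bigr => w _; rewrite ffunE.
  rewrite -(pair_bigA _ (fun t r => PX t * PR r)) /=.
  transitivity (\sum_t PX t * \sum_r PR r).
    by symmetry; apply: eq_bigr => t _; rewrite mulr_sumr.
  by rewrite PR1; under eq_bigr do rewrite mulr1.
have supp : forall w, P w != 0 -> w.1 \in S /\ 0 < PR w.2.
  move=> w; rewrite ffunE mulf_eq0 negb_or => /andP[a b]; split; first exact: Hsupp.
  by rewrite lt0r b PR0.
have pv1 : forall t t', PX t != 0 -> PX t' != 0 -> t.1.1 = t'.1.1 -> forall v,
  share_dist PR (fun r => ((psi t r).1.1, (psi t r).2)) v =
  share_dist PR (fun r => ((psi t' r).1.1, (psi t' r).2)) v.
  by move=> t t' a b; apply: Pv1; apply: Hsupp.
have pv2 : forall t t', PX t != 0 -> PX t' != 0 -> t.1.2 = t'.1.2 -> forall v,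
  share_dist PR (fun r => ((psi t r).1.2, (psi t r).1.1)) v =
  share_dist PR (fun r => ((psi t' r).1.2, (psi t' r).1.1)) v.
  by move=> t t' a b; apply: Pv2; apply: Hsupp.
have pv3 : forall t t', PX t != 0 -> PX t' != 0 -> t.2 = t'.2 -> forall v,
  share_dist PR (fun r => ((psi t r).2, (psi t r).1.2)) v =
  share_dist PR (fun r => ((psi t' r).2, (psi t' r).1.2)) v.
  by move=> t t' a b; apply: Pv3; apply: Hsupp.
have h1 : forall w, P w != 0 -> X1 w = phi1 (w12 w, w31 w).
  by move=> w /supp [a b]; rewrite Hphi1.
have h2 : forall w, P w != 0 -> X2 w = phi2 (w23 w, w12 w).
  by move=> w /supp [a b]; rewrite Hphi2.
have h3 : forall w, P w != 0 -> X3 w = phi3 (w31 w, w23 w).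
  by move=> w /supp [a b]; rewrite Hphi3.
split.
- apply: (@core R _ P pP0 _ _ _ _ _ w12 w23 w31 X1 X3 phi1 (fun t => phi3 (t.2, t.1)) pP1 h1).
  + by move=> w /h3.
  + exact: (markov_joint PR1 (kx := fun t => t.1.1) (fun t => t.2) (s := fun t r => (psi t r).2)
      (share_priv snd pv1)).
  + exact: (markov_joint PR1 (kx := fun t => t.2) (fun t => t.1.1) (s := fun t r => (psi t r).2)
      (share_priv fst pv3)).
- apply: (@core R _ P pP0 _ _ _ _ _ w23 w31 w12 X2 X1 phi2 (fun t => phi1 (t.2, t.1)) pP1 h2).
  + by move=> w /h1.
  + exact: (markov_joint PR1 (kx := fun t => t.1.2) (fun t => t.1.1) (s := fun t r => (psi t r).1.1)
      (share_priv snd pv2)).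
  + exact: (markov_joint PR1 (kx := fun t => t.1.1) (fun t => t.1.2) (s := fun t r => (psi t r).1.1)
      (share_priv fst pv1)).
- apply: (@core R _ P pP0 _ _ _ _ _ w31 w12 w23 X3 X2 phi3 (fun t => phi2 (t.2, t.1)) pP1 h3).
  + by move=> w /h2.
  + exact: (markov_joint PR1 (kx := fun t => t.2) (fun t => t.1.2) (s := fun t r => (psi t r).1.2)
      (share_priv snd pv3)).
  + exact: (markov_joint PR1 (kx := fun t => t.1.2) (fun t => t.2) (s := fun t r => (psi t r).1.2)
      (share_priv fst pv2)).
Qed.
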